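(* Let $\theta_1,\theta_2>0$, $\theta=\theta_1+\theta_2$, $p=\theta_1/\theta$, $\beta>0$, $\phi=\theta/\beta$, and let $r_1,r_2=\frac12\big(1-\phi\pm\sqrt{(1-\phi)^2+4\phi p}\big)$ (so $0<r_1<1$, $r_2<0$). Let $a=(r_1-r_2)/2>0$, $b=(1-r_1)/(1-r_2)\in(0,1)$, $c=-r_1/r_2>0$. Let \[ \mu(t)=r_1+(r_1-r_2)\frac{b\,e^{-\beta(r_1-r_2)t/2}}{1-b\,e^{-\beta(r_1-r_2)t/2}},\qquad \nu(t)=r_1+(r_1-r_2)\frac{\frac{r_1}{r_2}e^{-\beta(r_1-r_2)t/2}}{1-\frac{r_1}{r_2}e^{-\beta(r_1-r_2)t/2}}, \] and let $p_{11}=\mathbb{E}[\mu(\tau)]$, $p_{21}=\mathbb{E}[\nu(\tau)]$ with $\tau$ exponential of rate 1. Then \[ p_{11}=r_1+2b^{-1/(a\beta)}\beta^{-1}\int_0^by^{1/(a\beta)}(1-y)^{-1}dy=r_1+2\beta^{-1}\sum_{k=0}^\infty\frac{b^{k+1}}{1/(a\beta)+k+1}, \] \begin{align*} p_{21}&=r_1-2c^{-1/(a\beta)}\beta^{-1}\int_0^{c/(1+c)}y^{1/(a\beta)}(1-y)^{-1/(a\beta)-1}dy\\ &=r_1-2c^{-1/(a\beta)}\beta^{-1}\sum_{k=0}^\infty\frac{\big((a\beta+1)/(a\beta)\big)_{(k)}}{k!}\frac{\big(c/(1+c)\big)^{1/(a\beta)+k+1}}{1/(a\beta)+k+1}, \end{align*}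 where $a_{(k)}=a(a+1)\cdots(a+k-1)$.
   Context: $\mu(t)$ and $\nu(t)$ are the solutions of $\dot\chi=\tfrac12(\theta_1-\theta\chi)+\tfrac12\beta\chi(1-\chi)$ with $\chi(0)=1$ and $\chi(0)=0$ respectively; $p_{11},p_{21}$ are the entries of the transition matrix between the types of successive whole-population replacements in the star-shaped Fleming–Viot model with mutation and selection. *)

(* Defs.v *)
From Stdlib Require Import Reals Arith Factorial.
From Coquelicot Require Import Coquelicot.
Open Scope R_scope.

Fixpoint rising (a : R) (k : nat) : R :=
  match k with
  | O => 1
  | S k' => rising a k' * (a + INR k')
  end.

Definition theta (th1 th2 : R) : R := th1 + th2.
Definition pp (th1 th2 : R) : R := th1 / theta th1 th2.
Definition phi (th1 th2 beta : R) : R := theta th1 th2 / beta.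

Definition r1 (th1 th2 beta : R) : R :=
  let f := phi th1 th2 beta in
  (1 - f + sqrt ((1 - f) ^ 2 + 4 * f * pp th1 th2)) / 2.
Definition r2 (th1 th2 beta : R) : R :=
  let f := phi th1 th2 beta in
  (1 - f - sqrt ((1 - f) ^ 2 + 4 * f * pp th1 th2)) / 2.

Definition aa (th1 th2 beta : R) : R := (r1 th1 th2 beta - r2 th1 th2 beta) / 2.
Definition bb (th1 th2 beta : R) : R := (1 - r1 th1 th2 beta) / (1 - r2 th1 th2 beta).
Definition cc (th1 th2 beta : R) : R := - r1 th1 th2 beta / r2 th1 th2 beta.

Definition mu (th1 th2 beta : R) (t : R) : R :=
  let R1 := r1 th1 th2 beta in let R2 := r2 th1 th2 beta in
  let e := exp (- beta * (R1 - R2) * t / 2) in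
  R1 + (R1 - R2) * (bb th1 th2 beta * e / (1 - bb th1 th2 beta * e)).

Definition nu (th1 th2 beta : R) (t : R) : R :=
  let R1 := r1 th1 th2 beta in let R2 := r2 th1 th2 beta in
  let e := exp (- beta * (R1 - R2) * t / 2) in
  R1 + (R1 - R2) * ((R1 / R2) * e / (1 - (R1 / R2) * e)).

(* E[g(tau)] for tau ~ Exp(1): the improper integral of g(t) e^{-t} over
   [0, +oo), i.e. "expectation of g(tau) equals v". *)
Definition exp1_expectation (g : R -> R) (v : R) : Prop :=
  is_RInt_gen (fun t => g t * exp (- t)) (at_point 0) (Rbar_locally p_infty) v.

(* Main.v *)
Require Import Defs.
From Stdlib Require Import Reals Arith Factorial Lra.
From Coquelicot Require Import Coquelicot.
Open Scope R_scope.

Definition lim0 (h : R -> R) : Prop :=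
  forall eps, 0 < eps -> exists delta, 0 < delta /\
    forall y, 0 < y < delta -> Rabs (h y) < eps.

Lemma ball_R (x e y : R) : ball x e y <-> Rabs (y - x) < e.
Proof. reflexivity. Qed.
Lemma ball_R1 (x e y : R) : ball x e y -> Rabs (y - x) < e.
Proof. exact (fun h => h). Qed.

Lemma loc_lt (h : R -> R) (x c : R) :
  continuous h x -> h x < c -> locally x (fun u => h u < c).
Proof.
  intros Hc Hx.
  assert (Hp : 0 < c - h x) by lra.
  eapply filter_imp; [| apply (proj1 (filterlim_locally h (h x)) Hc (mkposreal _ Hp))].
  intros u Hu. apply ball_R1 in Hu. simpl in Hu.
  apply Rabs_def2 in Hu. destruct Hu; unfold minus, plus, opp in *; simpl in *; lra.
Qed.

Lemma loc_gt (h : R -> R) (x c : R) :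
  continuous h x -> c < h x -> locally x (fun u => c < h u).
Proof.
  intros Hc Hx.
  assert (Hp : 0 < h x - c) by lra.
  eapply filter_imp; [| apply (proj1 (filterlim_locally h (h x)) Hc (mkposreal _ Hp))].
  intros u Hu. apply ball_R1 in Hu. simpl in Hu.
  apply Rabs_def2 in Hu. destruct Hu; unfold minus, plus, opp in *; simpl in *; lra.
Qed.

Lemma cont_id (x : R) : continuous (fun u => u) x.
Proof. apply continuous_id. Qed.

Lemma loc_lt_id (x c : R) : x < c -> locally x (fun u => u < c).
Proof. intro H. apply (loc_lt (fun u => u)); auto. apply continuous_id. Qed.
Lemma loc_gt_id (x c : R) : c < x -> locally x (fun u => c < u).
Proof. intro H. apply (loc_gt (fun u => u)); auto. apply continuous_id. Qed.

Lemma Rabs_small (x : R) : (forall eps, 0 < eps -> Rabs x < eps) -> x = 0.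
Proof.
  intros H. destruct (Req_dec x 0) as [|Hn]; auto.
  assert (Hp : 0 < Rabs x) by (apply Rabs_pos_lt; auto).
  specialize (H _ Hp). lra.
Qed.

Lemma Rpower_lt_base (x y s : R) : 0 < x -> x < y -> 0 < s -> Rpower x s < Rpower y s.
Proof.
  intros Hx Hxy Hs. unfold Rpower. apply exp_increasing.
  apply Rmult_lt_compat_l; auto. apply ln_increasing; auto.
Qed.

Lemma Rpower_pos (x s : R) : 0 < Rpower x s.
Proof. unfold Rpower. apply exp_pos. Qed.

Lemma lim0_cont (s : R) (k : R -> R) :
  0 < s -> continuous k 0 -> lim0 (fun y => Rpower y s * k y).
Proof.
  intros Hs Hk eps Heps.
  destruct (proj1 (filterlim_locally k (k 0)) Hk (mkposreal 1 Rlt_0_1)) as [d1 Hd1].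
  set (K := Rabs (k 0) + 1).
  assert (HK : 0 < K) by (unfold K; pose proof (Rabs_pos (k 0)); lra).
  assert (He : 0 < eps / K) by (apply Rdiv_lt_0_compat; auto).
  set (d2 := Rpower (eps / K) (/ s)).
  exists (Rmin d1 d2). split.
  { apply Rmin_pos. apply cond_pos. apply Rpower_pos. }
  intros y [Hy0 Hy].
  assert (Hkb : Rabs (k y) <= K).
  { assert (ball 0 d1 y).
    { apply ball_R. rewrite Rminus_0_r, Rabs_pos_eq by lra.
      apply Rlt_le_trans with (1 := Hy). apply Rmin_l. }
    specialize (Hd1 y H). apply ball_R1 in Hd1. unfold minus, plus, opp in *; simpl in *.
    unfold K. pose proof (Rabs_triang_inv (k y) (k 0)). lra. }
  assert (Hys : Rpower y s < eps / K).
  { replace (eps / K) with (Rpower d2 s).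
    apply Rpower_lt_base; auto. apply Rlt_le_trans with (1 := Hy). apply Rmin_r.
    unfold d2. rewrite Rpower_mult. rewrite Rinv_l by lra. apply Rpower_1; auto. }
  rewrite Rabs_mult, (Rabs_pos_eq (Rpower y s)) by (apply Rlt_le, Rpower_pos).
  pose proof (Rpower_pos y s).
  apply Rle_lt_trans with (Rpower y s * K).
  apply Rmult_le_compat_l; lra.
  replace eps with (eps / K * K) by (field; lra).
  apply Rmult_lt_compat_r; auto.
Qed.

Lemma int0 (f F : R -> R) (b : R) :
  0 < b < 1 -> (forall y, 0 < y < 1 -> continuous f y) -> lim0 f ->
  (forall y, 0 < y < 1 -> is_derive F y (f y)) -> lim0 F -> is_RInt f 0 b (F b).
Proof.
  intros Hb Hfc Hf0 HF HF0.
  set (g := fun y => if Rle_dec y 0 then 0 else f y).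
  assert (Hg : forall y, y < 1 -> continuous g y).
  { intros y Hy1. destruct (Rtotal_order y 0) as [Hlt|[Heq|Hgt]].
    - apply continuous_ext_loc with (fun _ => 0).
      + eapply filter_imp; [|apply (loc_lt_id y 0 Hlt)].
        intros u Hu. unfold g. destruct (Rle_dec u 0); auto; lra.
      + apply continuous_const.
    - subst y. apply filterlim_locally. intros eps.
      destruct (Hf0 eps (cond_pos eps)) as [d [Hd Hd']].
      exists (mkposreal d Hd). intros u Hu. apply ball_R1 in Hu. simpl in Hu.
      apply ball_R. unfold g. destruct (Rle_dec 0 0); [|lra].
      destruct (Rle_dec u 0).
      + rewrite Rminus_0_r, Rabs_R0. apply cond_pos.
      + rewrite Rminus_0_r. apply Hd'.
        rewrite Rminus_0_r, Rabs_pos_eq in Hu; lra.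
    - apply continuous_ext_loc with f.
      + eapply filter_imp; [|apply (loc_gt_id y 0 Hgt)].
        intros u Hu. unfold g. destruct (Rle_dec u 0); auto; lra.
      + apply Hfc; lra. }
  assert (Hex : forall z, -b < z <= b -> ex_RInt g z b).
  { intros z Hz. apply (@ex_RInt_continuous R_CompleteNormedModule). intros u Hu.
    rewrite Rmin_left, Rmax_right in Hu by lra. apply Hg; lra. }
  set (J := fun z => RInt g z b).
  assert (HJc : continuous J 0).
  { apply (continuous_RInt_2 g 0 b J).
    exists (mkposreal b (proj1 Hb)). intros z Hz. apply ball_R1 in Hz. simpl in Hz.
    rewrite Rminus_0_r in Hz. apply Rabs_def2 in Hz.
    unfold J; apply (@RInt_correct R_CompleteNormedModule), Hex. lra. }
  assert (HJx : forall x, 0 < x <= b -> J x = F b - F x).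
  { intros x Hx. unfold J. apply is_RInt_unique.
    apply (is_RInt_derive F g x b).
    - intros u Hu. rewrite Rmin_left, Rmax_right in Hu by lra.
      unfold g. destruct (Rle_dec u 0); [lra|]. apply HF; lra.
    - intros u Hu. rewrite Rmin_left, Rmax_right in Hu by lra. apply Hg; lra. }
  assert (HJ0 : J 0 = F b).
  { apply Rminus_diag_uniq, Rabs_small. intros eps Heps.
    assert (He2 : 0 < eps / 2) by lra.
    destruct (proj1 (filterlim_locally J (J 0)) HJc (mkposreal _ He2)) as [d1 Hd1].
    destruct (HF0 (eps/2) He2) as [d2 [Hd2 Hd2']].
    set (x := Rmin b (Rmin d1 d2) / 2).
    pose proof (Rmin_l b (Rmin d1 d2)). pose proof (Rmin_r b (Rmin d1 d2)).
    pose proof (Rmin_l d1 d2). pose proof (Rmin_r d1 d2).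
    assert (Hxp : 0 < Rmin b (Rmin d1 d2)).
    { apply Rmin_pos; [lra|]. apply Rmin_pos; [apply cond_pos|lra]. }
    assert (Hb1 : ball 0 d1 x).
    { apply ball_R. rewrite Rminus_0_r, Rabs_pos_eq; unfold x; lra. }
    specialize (Hd1 x Hb1). apply ball_R1 in Hd1. simpl in Hd1.
    assert (Hx2 : Rabs (F x) < eps / 2) by (apply Hd2'; unfold x; lra).
    rewrite HJx in Hd1 by (unfold x; lra).
    apply Rabs_def2 in Hd1. apply Rabs_def2 in Hx2.
    apply Rabs_def1; lra. }
  assert (HgI : is_RInt g 0 b (F b)).
  { rewrite <- HJ0. unfold J; apply (@RInt_correct R_CompleteNormedModule), Hex. lra. }
  apply (is_RInt_ext g f); auto.
  intros x Hx. rewrite Rmin_left, Rmax_right in Hx by lra.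
  unfold g. destruct (Rle_dec x 0); auto; lra.
Qed.

Lemma gen_deriv (g Phi : R -> R) (d : R) :
  0 < d ->
  (forall t, -d < t -> is_derive Phi t (g t)) ->
  (forall t, 0 <= t -> continuous g t) ->
  (forall eps, 0 < eps -> exists M, forall t, M < t -> Rabs (Phi t) < eps) ->
  is_RInt_gen g (at_point 0) (Rbar_locally p_infty) (- Phi 0).
Proof.
  intros Hd HD Hc Hl.
  assert (HDe : forall t, -d < t -> Derive Phi t = g t).
  { intros t Ht. apply is_derive_unique, HD, Ht. }
  assert (H := is_RInt_gen_Derive (Fa := at_point 0) (Fb := Rbar_locally p_infty)
                 Phi (Phi 0) 0).
  replace (- Phi 0) with (0 - Phi 0) by ring.
  apply (is_RInt_gen_ext (Derive Phi)).
  { apply Filter_prod with (fun x => x = 0) (fun y => 0 < y).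
    - reflexivity.
    - exists 0. auto.
    - intros x y Hx Hy u Hu. simpl in Hu. subst x.
      rewrite Rmin_left, Rmax_right in Hu by lra. apply HDe. lra. }
  apply H.
  - apply Filter_prod with (fun x => x = 0) (fun y => 0 < y).
    + reflexivity.
    + exists 0. auto.
    + intros x y Hx Hy u Hu. simpl in Hu. subst x.
      rewrite Rmin_left, Rmax_right in Hu by lra. exists (g u). apply HD. lra.
  - apply Filter_prod with (fun x => x = 0) (fun y => 0 < y).
    + reflexivity.
    + exists 0. auto.
    + intros x y Hx Hy u Hu. simpl in Hu. subst x.
      rewrite Rmin_left, Rmax_right in Hu by lra.
      apply continuous_ext_loc with g.
      * eapply filter_imp; [|apply (loc_gt_id u (-d)); lra].
        intros v Hv. symmetry. apply HDe; auto.
      * apply Hc; lra.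
  - intros P HP. apply locally_singleton in HP. exact HP.
  - apply filterlim_locally. intros eps.
    destruct (Hl eps (cond_pos eps)) as [M HM]. exists M. intros t Ht.
    apply ball_R. rewrite Rminus_0_r. auto.
Qed.

Lemma Rpower_deriv (s y : R) : 0 < y -> is_derive (fun y => Rpower y s) y (s * Rpower y (s-1)).
Proof.
  intros Hy. unfold Rpower. auto_derive; auto.
  replace ((s-1)*ln y) with (s * ln y + - ln y) by ring.
  rewrite exp_plus, exp_Ropp, exp_ln by auto. field. lra.
Qed.

Lemma lim_ratio (x y : R) : 0 < y ->
  is_lim_seq (fun n => (x + INR n) / (y + INR n)) 1.
Proof.
  intros Hy.
  apply is_lim_seq_ext with (fun n => 1 + (x - y) * / (y + INR n)).
  { intros n. pose proof (pos_INR n). field. lra. }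
  replace (Finite 1) with (Finite (1 + (x - y) * 0)) by (f_equal; ring).
  apply is_lim_seq_plus'. apply is_lim_seq_const.
  apply is_lim_seq_mult'. apply is_lim_seq_const.
  replace (Finite 0) with (Rbar_inv p_infty) by reflexivity.
  apply is_lim_seq_inv; [|discriminate].
  eapply is_lim_seq_plus. apply is_lim_seq_const. apply is_lim_seq_INR.
  reflexivity.
Qed.

Lemma radius1 (a : nat -> R) : (forall n, a n <> 0) ->
  is_lim_seq (fun n => Rabs (a (S n) / a n)) 1 -> CV_radius a = 1.
Proof.
  intros H0 H. rewrite (CV_radius_finite_DAlembert a 1); auto.
  rewrite Rinv_1. reflexivity. lra.
Qed.

Lemma in_rad (a : nat -> R) (y : R) : CV_radius a = 1 -> Rabs y < 1 ->
  Rbar_lt (Rabs y) (CV_radius a).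
Proof. intros H Hy. rewrite H. simpl. exact Hy. Qed.

Lemma Fderiv (al : R) (c : nat -> R) (y : R) :
  CV_radius c = 1 -> 0 < y < 1 ->
  is_derive (fun y => Rpower y (al+1) * PSeries c y) y
    (Rpower y al * PSeries (fun k => (al + INR k + 1) * c k) y).
Proof.
  intros Hc Hy.
  assert (Hr : Rbar_lt (Rabs y) (CV_radius c)).
  { apply in_rad; auto. rewrite Rabs_pos_eq; lra. }
  assert (Hr' : Rbar_lt (Rabs y) (CV_radius (PS_derive c))).
  { rewrite CV_radius_derive; auto. }
  assert (H := is_derive_mult (fun y => Rpower y (al+1)) (PSeries c) y _ _
     (Rpower_deriv (al+1) y (proj1 Hy)) (is_derive_PSeries c y Hr) (fun n m => Rmult_comm n m)).
  replace (al + 1 - 1) with al in H by ring.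
  match type of H with is_derive _ _ ?L => replace (Rpower y al * PSeries (fun k => (al + INR k + 1) * c k) y) with L; [exact H|] end.
  unfold plus, mult; simpl.
  rewrite (PSeries_ext (fun k => (al + INR k + 1) * c k)
     (PS_plus (PS_scal (al+1) c) (PS_incr_1 (PS_derive c)))).
  2:{ intros [|m]; unfold PS_plus, PS_scal, PS_incr_1, PS_derive, plus, scal, mult, zero;
      cbn -[INR]; unfold mult; cbn -[INR]; rewrite ?S_INR; simpl; ring. }
  rewrite PSeries_plus.
  2:{ apply ex_pseries_scal. apply Rmult_comm. apply CV_radius_inside; auto. }
  2:{ apply ex_pseries_incr_1. apply CV_radius_inside; auto. }
  rewrite PSeries_scal, PSeries_incr_1.
  replace (al + 1) with (al + 1) by ring.
  rewrite Rpower_plus, Rpower_1 by lra. ring.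
Qed.

Definition bcoef (al : R) (k : nat) : R := rising al k / INR (fact k).

Lemma rising_pos (al : R) (k : nat) : 0 < al -> 0 < rising al k.
Proof.
  intros Ha. induction k; simpl. lra.
  apply Rmult_lt_0_compat; auto. pose proof (pos_INR k). lra.
Qed.

Lemma bcoef_S (al : R) (m : nat) :
  bcoef al (S m) * INR (S m) = bcoef al m * (al + INR m).
Proof.
  unfold bcoef. change (rising al (S m)) with (rising al m * (al + INR m)).
  rewrite fact_simpl, mult_INR.
  pose proof (INR_fact_neq_0 m). pose proof (pos_INR m). rewrite S_INR.
  field. split; auto. lra.
Qed.

Lemma bcoef_pos (al : R) (k : nat) : 0 < al -> 0 < bcoef al k.
Proof.
  intros Ha. unfold bcoef. apply Rdiv_lt_0_compat. apply rising_pos; auto.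
  apply lt_0_INR. apply lt_O_fact.
Qed.

Lemma bcoef_rad (al : R) : 0 < al -> CV_radius (bcoef al) = 1.
Proof.
  intros Ha. apply radius1.
  { intros n. pose proof (bcoef_pos al n Ha). lra. }
  apply is_lim_seq_ext with (fun n => (al + INR n) / (1 + INR n)).
  2: apply lim_ratio; lra.
  intros n. pose proof (bcoef_S al n). pose proof (bcoef_pos al n Ha).
  pose proof (bcoef_pos al (S n) Ha). pose proof (pos_INR n).
  rewrite Rabs_pos_eq.
  2:{ apply Rlt_le, Rdiv_lt_0_compat; auto. }
  rewrite S_INR in H.
  field_simplify_eq; [|lra].
  nra.
Qed.

Lemma Rpower_1_base (s : R) : Rpower 1 s = 1.
Proof. unfold Rpower. rewrite ln_1, Rmult_0_r. apply exp_0. Qed.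

Lemma binom (al y : R) : 0 < al -> Rabs y < 1 ->
  PSeries (bcoef al) y = Rpower (1 - y) (- al).
Proof.
  intros Ha Hy.
  set (b := bcoef al).
  assert (Hrad := bcoef_rad al Ha).
  set (h := fun t => PSeries b t * Rpower (1 - t) al).
  assert (Hd : forall t, Rabs (t - 0) <= Rabs y -> is_derive h t 0).
  { intros t Ht. rewrite Rminus_0_r in Ht.
    assert (Htl : Rabs t < 1) by lra.
    assert (Ht1 : 0 < 1 - t) by (apply Rabs_def2 in Htl; lra).
    assert (Hr : Rbar_lt (Rabs t) (CV_radius b)) by (apply in_rad; auto).
    assert (HR : is_derive (fun t => Rpower (1 - t) al) t (- al * Rpower (1 - t) al / (1 - t))).
    { unfold Rpower. auto_derive; [lra|]. replace (1 + - t) with (1 - t) by ring. field. lra. }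
    assert (H := is_derive_mult (PSeries b) (fun t => Rpower (1 - t) al) t _ _
       (is_derive_PSeries b t Hr) HR (fun n m => Rmult_comm n m)).
    match type of H with is_derive _ _ ?L => replace 0 with L; [exact H|] end.
    unfold plus, mult; simpl.
    assert (Hid : PSeries (PS_derive b) t - t * PSeries (PS_derive b) t = al * PSeries b t).
    { rewrite <- PSeries_incr_1, <- PSeries_scal.
      assert (E1 : ex_pseries (PS_derive b) t) by (apply ex_pseries_derive; auto).
      assert (E2 : ex_pseries (PS_incr_1 (PS_derive b)) t) by (apply ex_pseries_incr_1; auto).
      rewrite <- PSeries_minus by auto.
      apply PSeries_ext. intros [|m];
        unfold PS_minus, PS_scal, PS_incr_1, PS_derive, minus, plus, opp, scal, mult, zero;
        cbn -[INR b]; unfold mult; cbn -[INR b].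
      - unfold b, bcoef. simpl. field.
      - pose proof (bcoef_S al (S m)). pose proof (bcoef_S al m).
        fold b in H0, H1. rewrite !S_INR in *. nra. }
    assert (HRp : 0 < Rpower (1 - t) al) by apply Rpower_pos.
    apply Rmult_eq_reg_r with (1 - t); [|lra].
    field_simplify; [|lra].
    transitivity (Rpower (1 - t) al * ((PSeries (PS_derive b) t - t * PSeries (PS_derive b) t)
             - al * PSeries b t)); [ring|]. rewrite Hid. ring. }
  destruct (MVT_cor4 h (fun _ => 0) 0 (Rabs y) Hd y) as [c [Hc _]].
  { rewrite Rminus_0_r. right. reflexivity. }
  unfold h in Hc. rewrite PSeries_0, Rminus_0_r, Rpower_1_base in Hc.
  unfold b, bcoef in Hc. simpl in Hc.
  assert (Hy1 : 0 < 1 - y) by (apply Rabs_def2 in Hy; lra).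
  rewrite Rpower_Ropp.
  pose proof (Rpower_pos (1 - y) al).
  fold b in Hc. apply Rmult_eq_reg_r with (Rpower (1 - y) al); [|lra].
  rewrite Rinv_l by lra. unfold b, bcoef. lra.
Qed.

Lemma Rpower_exp (u s : R) : Rpower (exp u) s = exp (s * u).
Proof. unfold Rpower. rewrite ln_exp. reflexivity. Qed.

Lemma Rpower_inv_base (x s : R) : 0 < x -> Rpower (/ x) s = Rpower x (- s).
Proof. intros Hx. unfold Rpower. rewrite ln_Rinv by auto. f_equal. ring. Qed.

Lemma Rpower_cancel (x s : R) : 0 < x -> Rpower x (- s) * Rpower x s = 1.
Proof. intros Hx. rewrite <- Rpower_plus. replace (-s + s) with 0 by ring. apply Rpower_O; auto. Qed.

Lemma exp_small (c k eps : R) : 0 < c -> 0 < k -> 0 < eps ->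
  exists M, forall t, M < t -> c * exp (- k * t) < eps.
Proof.
  intros Hc Hk He. exists (ln (c / eps) / k). intros t Ht.
  assert (H1 : - k * t < - ln (c / eps)).
  { apply Rmult_lt_compat_l with (r := k) in Ht; auto.
    unfold Rdiv in Ht. rewrite <- Rmult_assoc, (Rmult_comm k), Rmult_assoc, Rinv_r, Rmult_1_r in Ht by lra.
    lra. }
  apply exp_increasing in H1. rewrite exp_Ropp, exp_ln in H1.
  2: apply Rdiv_lt_0_compat; auto.
  replace (/ (c / eps)) with (eps / c) in H1 by (field; lra).
  apply Rmult_lt_compat_l with (r := c) in H1; auto.
  replace (c * (eps / c)) with eps in H1 by (field; lra). exact H1.
Qed.

Lemma phi_lim (R1 K k B : R) (F y : R -> R) :
  0 < k -> 0 < B -> lim0 F -> (forall t, 0 < y t <= B * exp (- k * t)) ->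
  forall eps, 0 < eps -> exists M, forall t, M < t ->
    Rabs (- R1 * exp (- t) + K * F (y t)) < eps.
Proof.
  intros Hk HB HF Hy eps He.
  assert (HR : 0 < Rabs R1 + 1) by (pose proof (Rabs_pos R1); lra).
  assert (HK : 0 < Rabs K + 1) by (pose proof (Rabs_pos K); lra).
  assert (He1 : 0 < eps / 2 / (Rabs R1 + 1)) by (apply Rdiv_lt_0_compat; lra).
  assert (He2 : 0 < eps / 2 / (Rabs K + 1)) by (apply Rdiv_lt_0_compat; lra).
  destruct (HF _ He2) as [d [Hd HFd]].
  destruct (exp_small 1 1 _ Rlt_0_1 Rlt_0_1 He1) as [M1 HM1].
  destruct (exp_small B k d HB Hk Hd) as [M2 HM2].
  exists (Rmax M1 M2). intros t Ht.
  assert (Ht1 : M1 < t) by (eapply Rle_lt_trans; [apply Rmax_l|exact Ht]).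
  assert (Ht2 : M2 < t) by (eapply Rle_lt_trans; [apply Rmax_r|exact Ht]).
  specialize (HM1 t Ht1). specialize (HM2 t Ht2).
  rewrite Rmult_1_l, <- Ropp_mult_distr_l, Rmult_1_l in HM1.
  destruct (Hy t) as [Hy0 Hy1].
  specialize (HFd (y t) (conj Hy0 (Rle_lt_trans _ _ _ Hy1 HM2))).
  pose proof (exp_pos (- t)).
  eapply Rle_lt_trans. apply Rabs_triang.
  rewrite !Rabs_mult, Rabs_Ropp, (Rabs_pos_eq (exp (- t))) by lra.
  pose proof (Rabs_pos R1). pose proof (Rabs_pos K). pose proof (Rabs_pos (F (y t))).
  assert (A1 : Rabs R1 * exp (- t) < eps / 2).
  { apply Rle_lt_trans with ((Rabs R1 + 1) * exp (- t)). nra.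
    replace (eps / 2) with ((Rabs R1 + 1) * (eps / 2 / (Rabs R1 + 1))) by (field; lra).
    apply Rmult_lt_compat_l; lra. }
  assert (A2 : Rabs K * Rabs (F (y t)) < eps / 2).
  { apply Rle_lt_trans with ((Rabs K + 1) * Rabs (F (y t))). nra.
    replace (eps / 2) with ((Rabs K + 1) * (eps / 2 / (Rabs K + 1))) by (field; lra).
    apply Rmult_lt_compat_l; lra. }
  lra.
Qed.

Definition cmu (al : R) (k : nat) : R := / (al + INR k + 1).

Lemma cmu_pos (al : R) (k : nat) : 0 < al -> 0 < cmu al k.
Proof. intros. unfold cmu. apply Rinv_0_lt_compat. pose proof (pos_INR k). lra. Qed.

Lemma cmu_rad (al : R) : 0 < al -> CV_radius (cmu al) = 1.
Proof.
  intros Ha. apply radius1.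
  { intros n. pose proof (cmu_pos al n Ha). lra. }
  apply is_lim_seq_ext with (fun n => ((al + 1) + INR n) / ((al + 2) + INR n)).
  2: apply lim_ratio; lra.
  intros n. pose proof (pos_INR n). unfold cmu.
  rewrite Rabs_pos_eq.
  2:{ apply Rlt_le, Rdiv_lt_0_compat; apply Rinv_0_lt_compat; rewrite ?S_INR; lra. }
  rewrite S_INR. field. lra.
Qed.

Definition Fmu (al y : R) : R := Rpower y (al + 1) * PSeries (cmu al) y.

Lemma Fmu_deriv (al y : R) : 0 < al -> 0 < y < 1 ->
  is_derive (Fmu al) y (Rpower y al / (1 - y)).
Proof.
  intros Ha Hy. unfold Fmu.
  assert (H := Fderiv al (cmu al) y (cmu_rad al Ha) Hy).
  match type of H with is_derive _ _ ?L => replace (Rpower y al / (1 - y)) with L; [exact H|] end.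
  rewrite (PSeries_ext _ (fun _ => 1)).
  2:{ intros n. unfold cmu. pose proof (pos_INR n). field. lra. }
  unfold PSeries. rewrite (Series_ext _ (fun k => y ^ k)) by (intros; ring).
  rewrite Series_geom. reflexivity. rewrite Rabs_pos_eq; lra.
Qed.

Lemma PSeries_cont0 (c : nat -> R) : CV_radius c = 1 -> continuous (PSeries c) 0.
Proof.
  intros Hc. apply (@ex_derive_continuous R_AbsRing R_NormedModule). eexists. apply is_derive_PSeries.
  apply in_rad; auto. rewrite Rabs_R0. lra.
Qed.

Lemma Fmu_lim0 (al : R) : 0 < al -> lim0 (Fmu al).
Proof.
  intros Ha. unfold Fmu. apply (lim0_cont (al + 1) (PSeries (cmu al))). lra.
  apply PSeries_cont0, cmu_rad, Ha.
Qed.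

Lemma I11_int (al b : R) : 0 < al -> 0 < b < 1 ->
  is_RInt (fun y => Rpower y al / (1 - y)) 0 b (Fmu al b).
Proof.
  intros Ha Hb. apply int0; auto.
  - intros y Hy. apply (@ex_derive_continuous R_AbsRing R_NormedModule). unfold Rpower. auto_derive. lra.
  - apply (lim0_cont al (fun y => / (1 - y))); auto.
    apply (@ex_derive_continuous R_AbsRing R_NormedModule). auto_derive. lra.
  - intros y Hy. apply Fmu_deriv; auto.
  - apply Fmu_lim0; auto.
Qed.

Lemma mu_gen (R1 R2 B beta : R) : 0 < beta -> R2 < R1 -> 0 < B < 1 ->
  is_RInt_gen (fun t => (R1 + (R1 - R2) * (B * exp (- beta * (R1 - R2) * t / 2)
     / (1 - B * exp (- beta * (R1 - R2) * t / 2)))) * exp (- t))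
   (at_point 0) (Rbar_locally p_infty)
   (R1 + 2 * Rpower B (- (1 / ((R1 - R2) / 2 * beta))) / beta
        * Fmu (1 / ((R1 - R2) / 2 * beta)) B).
Proof.
  intros Hbeta H12 HB.
  set (A := (R1 - R2) / 2). set (al := 1 / (A * beta)).
  set (k := A * beta).
  assert (HA : 0 < A) by (unfold A; lra).
  assert (Hk : 0 < k) by (unfold k; nra).
  assert (Hal : 0 < al) by (unfold al, k in *; apply Rdiv_lt_0_compat; nra).
  assert (Halk : al * k = 1) by (unfold al, k in *; field; nra).
  set (K := - (2 / beta * Rpower B (- al))).
  set (Phi := fun t => - R1 * exp (- t) + K * Fmu al (B * exp (- k * t))).
  assert (HlnB : ln B < 0).
  { rewrite <- ln_1. apply ln_increasing; lra. }
  set (d := - ln B / (2 * k)).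
  assert (Hd : 0 < d) by (unfold d; apply Rdiv_lt_0_compat; lra).
  replace (R1 + 2 * Rpower B (- al) / beta * Fmu al B) with (- Phi 0).
  2:{ unfold Phi, K. rewrite Ropp_0, Rmult_0_r, exp_0, Rmult_1_r. rewrite Rmult_1_r. field. lra. }
  assert (Hexp : forall t, exp (- beta * (R1 - R2) * t / 2) = exp (- k * t)).
  { intros t. f_equal. unfold k, A. field. }
  apply (gen_deriv _ Phi d Hd).
  - intros t Ht.
    assert (Hy0 : 0 < B * exp (- k * t)) by (pose proof (exp_pos (- k * t)); nra).
    assert (Hy1 : B * exp (- k * t) < 1).
    { assert (exp (- k * t) < exp (- ln B / 2)).
      { apply exp_increasing. unfold d in Ht.
        apply Rmult_lt_compat_l with (r := k) in Ht; auto.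
        replace (k * - (- ln B / (2 * k))) with (ln B / 2) in Ht by (field; lra). nra. }
      assert (B * exp (- ln B / 2) < 1).
      { rewrite <- (exp_ln B) at 1 by lra. rewrite <- exp_plus.
        rewrite <- exp_0. apply exp_increasing. lra. }
      nra. }
    assert (H1 : is_derive (fun t => - R1 * exp (- t)) t (R1 * exp (- t))).
    { auto_derive; auto. ring. }
    assert (H2 : is_derive (fun t => B * exp (- k * t)) t (- k * B * exp (- k * t))).
    { auto_derive; auto. ring. }
    assert (H3 := is_derive_comp (Fmu al) (fun t => B * exp (- k * t)) t _ _
                   (Fmu_deriv al _ Hal (conj Hy0 Hy1)) H2).
    assert (H4 := is_derive_scal _ t K _ H3).
    assert (H5 := is_derive_plus _ _ t _ _ H1 H4).
    match type of H5 with is_derive _ _ ?L =>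
      replace ((R1 + (R1 - R2) * (B * exp (- beta * (R1 - R2) * t / 2)
         / (1 - B * exp (- beta * (R1 - R2) * t / 2)))) * exp (- t)) with L; [exact H5|] end.
    unfold plus, scal; simpl. unfold mult; simpl.
    rewrite Hexp.
    rewrite <- Rpower_mult_distr by (auto; lra || apply exp_pos).
    rewrite Rpower_exp.
    assert (Ealt : al * (- k * t) = - t) by (replace (- t) with (- (al * k) * t) by (rewrite Halk; ring); ring). rewrite Ealt.
    unfold K.
    pose proof (Rpower_cancel B al (proj1 HB)).
    replace (R1 - R2) with (2 * A) by (unfold A; field).
    replace k with (A * beta) in * by reflexivity.
    transitivity (R1 * exp (- t) + 2 * A * B * exp (- (A * beta) * t) * exp (- t)
       * (Rpower B (- al) * Rpower B al) / (1 - B * exp (- (A * beta) * t))).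
    { field. lra. }
    rewrite H. field. lra.
  - intros t Ht. apply (@ex_derive_continuous R_AbsRing R_NormedModule).
    auto_derive. replace (- beta * (R1 - R2) * t * / 2) with (- k * t) by (unfold k, A; field).
    assert (exp (- k * t) <= 1).
    { rewrite <- exp_0. destruct (Req_dec t 0). subst; right; f_equal; ring.
      left. apply exp_increasing. nra. }
    nra.
  - intros eps He. unfold Phi.
    apply (phi_lim R1 K k B (Fmu al) (fun t => B * exp (- k * t))); auto.
    lra. apply Fmu_lim0; auto.
    intros t. pose proof (exp_pos (- k * t)). split; [nra|lra].
Qed.

Definition qn (al : R) (k : nat) : R := bcoef (al + 1) k / (al + INR k + 1).

Lemma qn_pos (al : R) (k : nat) : 0 < al -> 0 < qn al k.
Proof.
  intros Ha. unfold qn. apply Rdiv_lt_0_compat. apply bcoef_pos; lra.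
  pose proof (pos_INR k). lra.
Qed.

Lemma qn_rad (al : R) : 0 < al -> CV_radius (qn al) = 1.
Proof.
  intros Ha. apply radius1.
  { intros n. pose proof (qn_pos al n Ha). lra. }
  apply is_lim_seq_ext with (fun n => ((al + 1) + INR n) / (1 + INR n)
                              * (((al + 1) + INR n) / ((al + 2) + INR n))).
  2:{ replace (Finite 1) with (Finite (1 * 1)) by (f_equal; ring).
      apply is_lim_seq_mult'; apply lim_ratio; lra. }
  intros n. pose proof (pos_INR n).
  pose proof (bcoef_S (al + 1) n). pose proof (bcoef_pos (al + 1) n).
  pose proof (bcoef_pos (al + 1) (S n)).
  rewrite Rabs_pos_eq.
  2:{ apply Rlt_le, Rdiv_lt_0_compat; apply qn_pos; auto. }
  unfold qn. rewrite S_INR in *.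
  assert (E : bcoef (al + 1) (S n) = bcoef (al + 1) n * (al + 1 + INR n) / (INR n + 1)).
  { rewrite <- H0. field. lra. }
  rewrite E. field. repeat split; try lra.
Qed.

Definition Gnu (al y : R) : R := Rpower y (al + 1) * PSeries (qn al) y.

Lemma Gnu_deriv (al y : R) : 0 < al -> 0 < y < 1 ->
  is_derive (Gnu al) y (Rpower y al * Rpower (1 - y) (- al - 1)).
Proof.
  intros Ha Hy. unfold Gnu.
  assert (H := Fderiv al (qn al) y (qn_rad al Ha) Hy).
  match type of H with is_derive _ _ ?L => replace (Rpower y al * Rpower (1 - y) (- al - 1)) with L; [exact H|] end.
  rewrite (PSeries_ext _ (bcoef (al + 1))).
  2:{ intros n. unfold qn. pose proof (pos_INR n). field. lra. }
  rewrite binom. f_equal. f_equal. ring. lra. rewrite Rabs_pos_eq; lra.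
Qed.

Lemma Gnu_lim0 (al : R) : 0 < al -> lim0 (Gnu al).
Proof.
  intros Ha. unfold Gnu. apply (lim0_cont (al + 1) (PSeries (qn al))). lra.
  apply PSeries_cont0, qn_rad, Ha.
Qed.

Lemma I21_int (al b : R) : 0 < al -> 0 < b < 1 ->
  is_RInt (fun y => Rpower y al * Rpower (1 - y) (- al - 1)) 0 b (Gnu al b).
Proof.
  intros Ha Hb. apply int0; auto.
  - intros y Hy. apply (@ex_derive_continuous R_AbsRing R_NormedModule).
    unfold Rpower. auto_derive. lra.
  - apply (lim0_cont al (fun y => Rpower (1 - y) (- al - 1))); auto.
    apply (@ex_derive_continuous R_AbsRing R_NormedModule). unfold Rpower. auto_derive. lra.
  - intros y Hy. apply Gnu_deriv; auto.
  - apply Gnu_lim0; auto.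
Qed.

Lemma key_nu (C k al t : R) : 0 < C -> al * k = 1 ->
  Rpower (C * exp (- k * t) / (1 + C * exp (- k * t))) al
  * Rpower (1 - C * exp (- k * t) / (1 + C * exp (- k * t))) (- al - 1)
  = Rpower C al * exp (- t) * (1 + C * exp (- k * t)).
Proof.
  intros HC Hk.
  set (e := exp (- k * t)).
  assert (He : 0 < e) by apply exp_pos.
  set (x := 1 + C * e).
  assert (Hx : 0 < x) by (unfold x; nra).
  assert (E1 : 1 - C * e / x = / x) by (unfold x in *; field; lra).
  rewrite E1. unfold Rdiv. rewrite <- !Rpower_mult_distr by (try apply Rinv_0_lt_compat; nra).
  rewrite !Rpower_inv_base by auto.
  unfold e. rewrite Rpower_exp.
  replace (al * (- k * t)) with (- t)
    by (replace (- t) with (- (al * k) * t) by (rewrite Hk; ring); ring).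
  transitivity (Rpower C al * exp (- t) * (Rpower x (- al) * Rpower x (- (- al - 1)))).
  ring.
  rewrite <- Rpower_plus. replace (- al + - (- al - 1)) with 1 by ring.
  rewrite Rpower_1 by auto. reflexivity.
Qed.

Lemma nu_gen (R1 R2 beta : R) : 0 < beta -> R2 < 0 -> 0 < R1 ->
  is_RInt_gen (fun t => (R1 + (R1 - R2) * ((R1 / R2) * exp (- beta * (R1 - R2) * t / 2)
     / (1 - (R1 / R2) * exp (- beta * (R1 - R2) * t / 2)))) * exp (- t))
   (at_point 0) (Rbar_locally p_infty)
   (R1 - 2 * Rpower (- R1 / R2) (- (1 / ((R1 - R2) / 2 * beta))) / beta
        * Gnu (1 / ((R1 - R2) / 2 * beta)) (- R1 / R2 / (1 + - R1 / R2))).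
Proof.
  intros Hbeta HR2 HR1.
  set (C := - R1 / R2).
  assert (HC : 0 < C).
  { assert (/ R2 < 0) by (apply Rinv_lt_0_compat; auto). unfold C, Rdiv. nra. }
  assert (HRC : R1 / R2 = - C) by (unfold C; field; lra).
  set (A := (R1 - R2) / 2). set (al := 1 / (A * beta)).
  set (k := A * beta).
  assert (HA : 0 < A) by (unfold A; lra).
  assert (Hk : 0 < k) by (unfold k; nra).
  assert (Hal : 0 < al) by (unfold al, k in *; apply Rdiv_lt_0_compat; nra).
  assert (Halk : al * k = 1) by (unfold al, k in *; field; nra).
  set (K := 2 / beta * Rpower C (- al)).
  set (z := fun t => C * exp (- k * t) / (1 + C * exp (- k * t))).
  assert (Hz : forall t, 0 < z t < 1).
  { intros t. unfold z. pose proof (exp_pos (- k * t)).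
    split. apply Rdiv_lt_0_compat; nra.
    apply Rmult_lt_reg_r with (1 + C * exp (- k * t)). nra.
    unfold Rdiv. rewrite Rmult_assoc, Rinv_l by nra. nra. }
  set (Phi := fun t => - R1 * exp (- t) + K * Gnu al (z t)).
  replace (R1 - 2 * Rpower C (- al) / beta * Gnu al (C / (1 + C))) with (- Phi 0).
  2:{ unfold Phi, K, z. rewrite Ropp_0, Rmult_0_r, exp_0, !Rmult_1_r. field. lra. }
  assert (Hexp : forall t, exp (- beta * (R1 - R2) * t / 2) = exp (- k * t)).
  { intros t. f_equal. unfold k, A. field. }
  apply (gen_deriv _ Phi 1 Rlt_0_1).
  - intros t Ht.
    assert (H1 : is_derive (fun t => - R1 * exp (- t)) t (R1 * exp (- t))).
    { auto_derive; auto. ring. }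
    pose proof (exp_pos (- k * t)).
    assert (H2 : is_derive z t (- k * C * exp (- k * t) / (1 + C * exp (- k * t)) ^ 2)).
    { unfold z. auto_derive. nra. field. nra. }
    assert (H3 := is_derive_comp (Gnu al) z t _ _ (Gnu_deriv al _ Hal (Hz t)) H2).
    assert (H4 := is_derive_scal _ t K _ H3).
    assert (H5 := is_derive_plus _ _ t _ _ H1 H4).
    match type of H5 with is_derive _ _ ?L =>
      replace ((R1 + (R1 - R2) * ((R1 / R2) * exp (- beta * (R1 - R2) * t / 2)
         / (1 - (R1 / R2) * exp (- beta * (R1 - R2) * t / 2)))) * exp (- t)) with L; [exact H5|] end.
    unfold plus, scal; simpl. unfold mult; simpl.
    rewrite Hexp, HRC. unfold z. rewrite key_nu by auto.
    unfold K.
    pose proof (Rpower_cancel C al HC).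
    replace (R1 - R2) with (2 * A) by (unfold A; field).
    replace k with (A * beta) in * by reflexivity.
    transitivity (R1 * exp (- t) - 2 * A * C * exp (- (A * beta) * t) * exp (- t)
       * (Rpower C (- al) * Rpower C al) / (1 + C * exp (- (A * beta) * t))).
    { field. nra. }
    rewrite H0. field. nra.
  - intros t Ht. apply (@ex_derive_continuous R_AbsRing R_NormedModule).
    auto_derive. rewrite HRC. pose proof (exp_pos (- beta * (R1 - R2) * t * / 2)). nra.
  - intros eps He. unfold Phi.
    apply (phi_lim R1 K k C (Gnu al) z); auto.
    apply Gnu_lim0; auto.
    intros t. split. apply Hz. unfold z.
    pose proof (exp_pos (- k * t)).
    apply Rmult_le_reg_r with (1 + C * exp (- k * t)). nra.
    unfold Rdiv. rewrite Rmult_assoc, Rinv_l by nra. nra.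
Qed.

Lemma consts (th1 th2 beta : R) : 0 < th1 -> 0 < th2 -> 0 < beta ->
  0 < r1 th1 th2 beta < 1 /\ r2 th1 th2 beta < 0.
Proof.
  intros h1 h2 hb. unfold r1, r2.
  assert (Hf : 0 < phi th1 th2 beta).
  { unfold phi, theta. apply Rdiv_lt_0_compat; lra. }
  assert (Hp : 0 < pp th1 th2 < 1).
  { unfold pp, theta. split. apply Rdiv_lt_0_compat; lra.
    apply Rmult_lt_reg_r with (th1 + th2). lra.
    unfold Rdiv. rewrite Rmult_assoc, Rinv_l by lra. lra. }
  set (f := phi th1 th2 beta) in *. set (p := pp th1 th2) in *.
  set (D := (1 - f) ^ 2 + 4 * f * p).
  assert (Hfp : 0 < f * p) by (apply Rmult_lt_0_compat; lra).
  assert (HD : 0 <= D) by (unfold D; pose proof (pow2_ge_0 (1 - f)); lra).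
  pose proof (sqrt_pos D). pose proof (sqrt_sqrt D HD).
  set (s := sqrt D) in *.
  assert (Hs1 : (1 - f) * (1 - f) < s * s) by (unfold D in *; nra).
  assert (Hs2 : s * s < (1 + f) * (1 + f)) by (unfold D in *; nra).
  assert (Hs3 : 1 - f < s) by nra.
  assert (Hs4 : f - 1 < s) by nra.
  assert (Hs5 : s < 1 + f) by nra.
  lra.
Qed.

Lemma ex_pseries_R (a : nat -> R) (x : R) : ex_pseries a x -> ex_series (fun k => a k * x ^ k).
Proof.
  intros H. eapply ex_series_ext; [|exact H].
  intros k. simpl. rewrite pow_n_pow. unfold scal; simpl. unfold mult; simpl. ring.
Qed.

Theorem corollary2 (th1 th2 beta : R)
  (h1 : 0 < th1) (h2 : 0 < th2) (hb : 0 < beta) :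
  let R1 := r1 th1 th2 beta in
  let A := aa th1 th2 beta in
  let B := bb th1 th2 beta in
  let C := cc th1 th2 beta in
  let al := 1 / (A * beta) in
  let I11 := fun y => Rpower y al / (1 - y) in
  let I21 := fun y => Rpower y al * Rpower (1 - y) (- al - 1) in
  let s11 := fun k : nat => B ^ (k + 1) / (al + INR k + 1) in
  let s21 := fun k : nat =>
    rising ((A * beta + 1) / (A * beta)) k / INR (fact k)
    * Rpower (C / (1 + C)) (al + INR k + 1) / (al + INR k + 1) in
  (* p11 = E[mu(tau)] *)
  ex_RInt I11 0 B /\
  exp1_expectation (mu th1 th2 beta)
    (R1 + 2 * Rpower B (- al) / beta * RInt I11 0 B) /\
  ex_series s11 /\
  R1 + 2 * Rpower B (- al) / beta * RInt I11 0 B = R1 + 2 / beta * Series s11 /\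
  (* p21 = E[nu(tau)] *)
  ex_RInt I21 0 (C / (1 + C)) /\
  exp1_expectation (nu th1 th2 beta)
    (R1 - 2 * Rpower C (- al) / beta * RInt I21 0 (C / (1 + C))) /\
  ex_series s21 /\
  R1 - 2 * Rpower C (- al) / beta * RInt I21 0 (C / (1 + C))
    = R1 - 2 * Rpower C (- al) / beta * Series s21.
Proof.
  intros R1 A B C al I11 I21 s11 s21.
  destruct (consts th1 th2 beta h1 h2 hb) as [[Hr1 Hr1'] Hr2].
  set (R2 := r2 th1 th2 beta) in *. change (r1 th1 th2 beta) with R1 in Hr1, Hr1'.
  assert (HA : 0 < A) by (unfold A, aa; fold R1 R2; lra).
  assert (Hal : 0 < al) by (unfold al; apply Rdiv_lt_0_compat; nra).
  assert (HB : 0 < B < 1).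
  { unfold B, bb. fold R1 R2. split. apply Rdiv_lt_0_compat; lra.
    apply Rmult_lt_reg_r with (1 - R2). lra.
    unfold Rdiv. rewrite Rmult_assoc, Rinv_l by lra. lra. }
  assert (HC : 0 < C).
  { assert (/ R2 < 0) by (apply Rinv_lt_0_compat; auto). unfold C, cc, Rdiv. fold R1 R2. nra. }
  assert (Hz : 0 < C / (1 + C) < 1).
  { split. apply Rdiv_lt_0_compat; lra.
    apply Rmult_lt_reg_r with (1 + C). lra.
    unfold Rdiv. rewrite Rmult_assoc, Rinv_l by lra. lra. }
  assert (HI11 : is_RInt I11 0 B (Fmu al B)) by (apply I11_int; auto).
  assert (HI21 : is_RInt I21 0 (C / (1 + C)) (Gnu al (C / (1 + C)))) by (apply I21_int; auto).
  rewrite (is_RInt_unique _ _ _ _ HI11), (is_RInt_unique _ _ _ _ HI21).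
  assert (Hs11 : forall k, s11 k = B * (cmu al k * B ^ k)).
  { intros k. unfold s11, cmu. rewrite pow_add. pose proof (pos_INR k). simpl. field. lra. }
  assert (Hs21 : forall k, s21 k = Rpower (C / (1 + C)) (al + 1) * (qn al k * (C / (1 + C)) ^ k)).
  { intros k. unfold s21, qn, bcoef.
    replace ((A * beta + 1) / (A * beta)) with (al + 1) by (unfold al; field; nra).
    replace (al + INR k + 1) with ((al + 1) + INR k) at 1 by ring.
    rewrite Rpower_plus, Rpower_pow by lra.
    pose proof (pos_INR k). pose proof (INR_fact_neq_0 k). field. split; lra. }
  assert (HexB : ex_series (fun k => cmu al k * B ^ k)).
  { apply ex_pseries_R, CV_radius_inside, in_rad. apply cmu_rad; auto.
    rewrite Rabs_pos_eq; lra. }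
  assert (Hexz : ex_series (fun k => qn al k * (C / (1 + C)) ^ k)).
  { apply ex_pseries_R, CV_radius_inside, in_rad. apply qn_rad; auto.
    rewrite Rabs_pos_eq; lra. }
  split; [exists (Fmu al B); exact HI11|].
  split; [exact (mu_gen R1 R2 B beta hb ltac:(lra) HB)|].
  split.
  { apply ex_series_ext with (fun k => (cmu al k * B ^ k) * B).
    intros; rewrite Hs11; apply Rmult_comm. apply (ex_series_scal_r B _ HexB). }
  split.
  { rewrite (Series_ext _ _ Hs11), Series_scal_l. unfold Fmu, PSeries.
    transitivity (R1 + 2 / beta * (Rpower B (- al) * Rpower B (al + 1))
       * Series (fun k => cmu al k * B ^ k)).
    field. lra.
    rewrite <- Rpower_plus. replace (- al + (al + 1)) with 1 by ring.
    rewrite Rpower_1 by lra. field. lra. }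
  split; [exists (Gnu al (C / (1 + C))); exact HI21|].
  split; [exact (nu_gen R1 R2 beta hb Hr2 Hr1)|].
  split.
  { apply ex_series_ext with (fun k => (qn al k * (C / (1 + C)) ^ k) * Rpower (C / (1 + C)) (al + 1)).
    intros; rewrite Hs21; apply Rmult_comm. apply (ex_series_scal_r _ _ Hexz). }
  rewrite (Series_ext _ _ Hs21), Series_scal_l. reflexivity.
Qed.
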